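(* Assume the setup of the context, with $d_R\ge 2$, a glue code $H_G$ compatible with the memory via pasting matrices $S\neq 0$, $T$, and $d$ the memory distance. (A) Suppose the glue code is finely devised for $\Sigma$, and consider the measurement-sticker deformed code. Then: (i) $\{hP^{\mathrm T}: h\in\mathrm{rs}H^{M\text{-}M}_X\}=\mathrm{rs}H_X$, where $hP^{\mathrm T}$ denotes the restriction of $h$ to the block $u_0$; (ii) for every $h\in\mathrm{rs}H_Z$, the vector equal to $h$ on $u_0$ and zero elsewhere lies in $\mathrm{rs}H^{M\text{-}M}_Z$; (iii) for every $x\in\mathrm{rs}J_X$ with $xJ_{Z,A}^{\mathrm T}=0$ there exists $x'\in\mathrm{rs}J^{M\text{-}M}_X$ whose restriction to $u_0$ equals $x$; (iv) for every $z\in\mathrm{rs}J_Z$, the vector equal to $z$ on $u_0$ and zero elsewhere lies in $\mathrm{rs}J^{M\text{-}M}_Z+\mathrm{rs}H^{M\text{-}M}_Z$; (v) for every $z\in\mathrm{rs}J_{Z,A}$, the vector equal to $z$ on $u_0$ and zero elsewhere lies in $\mathrm{rs}H^{M\text{-}M}_Z$; (vi) the distance of the measurement-sticker deformed code is at least $\min\{d/|S|,d_R\}$. (B) Suppose the glue code is coarsely devised for $\Sigma$, and consider the branch-sticker deformed code. Then (i) and (ii) hold with $H^{M\text{-}B}_X,H^{M\text{-}B}_Z$ in place of $H^{M\text{-}M}_X,H^{M\text{-}M}_Z$, and moreover: (iii') for every $x\in\mathrm{rs}J_X$ there exists $x'\in\mathrm{rs}J^{M\text{-}B}_X$ whose restriction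 to $u_0$ equals $x$; (iv') for every $z\in\mathrm{rs}J_Z$, the vector equal to $z$ on $u_0$ and zero elsewhere lies in $\mathrm{rs}J^{M\text{-}B}_Z$; (v') for every $z\in\mathrm{rs}J_{Z,A}$ there exists $g\in\mathrm{rs}H^{M\text{-}B}_Z$ such that (the vector equal to $z$ on $u_0$ and zero elsewhere) $+\,g$ is supported entirely in the open-boundary block $u_{d_R-1}$; (vi') the distance of the branch-sticker deformed code is at least $d/|S|$.
   Context: All vectors are row vectors over $\mathbb F_2$. For a matrix $A$, $\mathrm{rs}A$ is its row space and $\ker A=\{x: Ax^{\mathrm T}=0\}$; for a set $V$ of row vectors and a matrix $M$, $VM=\{vM:v\in V\}$. $|x|$ is the Hamming weight and $E_m$ the $m\times m$ identity. The memory is a CSS subsystem code specified by $H_X\in\mathbb F_2^{r_X\times n}$, $H_Z\in\mathbb F_2^{r_Z\times n}$, $J_X,J_Z\in\mathbb F_2^{k\times n}$, $F_X,F_Z\in\mathbb F_2^{k_g\times n}$ satisfying $\ker H_X=\mathrm{rs}H_Z\oplus\mathrm{rs}J_Z\oplus\mathrm{rs}F_Z$, $\ker H_Z=\mathrm{rs}H_X\oplus\mathrm{rs}J_X\oplus\mathrm{rs}F_X$, $J_XJ_Z^{\mathrm T}=E_k$, $F_XF_Z^{\mathrm T}=E_{k_g}$. For matrices $H,J$ with the same number of columns, $d(H,J)=\min\{|e|: e\in\ker H,\ Je^{\mathrm T}\neq0\}$; the memory distance is $d=\min\{d(H_X,J_X),d(H_Z,J_Z)\}$, and the distance of a deformed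 code with matrices $H^{dc}_X,H^{dc}_Z,J^{dc}_X,J^{dc}_Z$ is $\min\{d(H^{dc}_X,J^{dc}_X),d(H^{dc}_Z,J^{dc}_Z)\}$. For $S\in\mathbb F_2^{n_G\times n}$, $|S|=\max_{x\neq0}|xS|/|x|$. Let $v_1,\dots,v_q\in\mathrm{rs}J_Z$ be linearly independent (representing the operator set $\Sigma$), $J_{Z,A}$ the matrix with rows $v_1,\dots,v_q$; extend to a basis $v_1,\dots,v_k$ of $\mathrm{rs}J_Z$ and let $J_{Z,C}$ have rows $v_{q+1},\dots,v_k$. Let $\bar J_Z$ be the invertible $k\times k$ matrix with $\binom{J_{Z,A}}{J_{Z,C}}=\bar J_ZJ_Z$ and define $J_{X,A}\in\mathbb F_2^{q\times n}$, $J_{X,C}\in\mathbb F_2^{(k-q)\times n}$ by $\binom{J_{X,A}}{J_{X,C}}=(\bar J_Z^{-1})^{\mathrm T}J_X$. A glue code is a binary linear code with check matrix $H_G\in\mathbb F_2^{r_G\times n_G}$; it is compatible via pasting matrices $S\in\mathbb F_2^{n_G\times n}$, $T\in\mathbb F_2^{r_X\times r_G}$ if $H_XS^{\mathrm T}=TH_G$; it is coarsely devised for $\Sigma$ if $\mathrm{span}(v_1,\dots,v_q)\subseteq(\ker H_G)S$, and finely devised for $\Sigma$ if there exist $u_1,u_2,\dots\in\mathrm{rs}H_Z\oplus\mathrm{rs}F_Z$ with $\mathrm{span}(v_1,\dots,v_q,u_1,u_2,\dots)=(\ker H_G)S$. When finely devised, fix $\gamma\in\mathbb F_2^{(k-q)\times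 r_G}$ with $J_{X,C}S^{\mathrm T}=\gamma H_G$ (such $\gamma$ exists). Measurement-sticker deformed code: coordinates are split into blocks $u_0\in\mathbb F_2^n$, $u_1,\dots,u_{d_R-1}\in\mathbb F_2^{n_G}$, $w_1,\dots,w_{d_R}\in\mathbb F_2^{r_G}$. $H^{M\text{-}M}_X$ has row-block $0$ equal to $H_X$ on $u_0$ and $T$ on $w_1$, and for $1\le j\le d_R-1$ row-block $j$ equal to $H_G$ on $u_j$, $E_{r_G}$ on $w_j$ and $E_{r_G}$ on $w_{j+1}$ (zero elsewhere). $H^{M\text{-}M}_Z$ has row-block $0$ equal to $H_Z$ on $u_0$, and for $1\le i\le d_R$ row-block $i$ equal to $S$ on $u_0$ (only if $i=1$), $E_{n_G}$ on $u_{i-1}$ (only if $i\ge2$), $E_{n_G}$ on $u_i$ (only if $i\le d_R-1$), and $H_G^{\mathrm T}$ on $w_i$. $J^{M\text{-}M}_X$ equals $J_{X,C}$ on $u_0$, $J_{X,C}S^{\mathrm T}$ on each of $u_1,\dots,u_{d_R-1}$, $0$ on $w_1,\dots,w_{d_R-1}$ and $\gamma$ on $w_{d_R}$; $J^{M\text{-}M}_Z$ equals $J_{Z,C}$ on $u_0$ and $0$ elsewhere. Branch-sticker deformed code: blocks $u_0\in\mathbb F_2^n$, $u_1,\dots,u_{d_R-1}\in\mathbb F_2^{n_G}$, $w_1,\dots,w_{d_R-1}\in\mathbb F_2^{r_G}$. $H^{M\text{-}B}_X$ has row-block $0$ equal to $H_X$ on $u_0$ and $T$ on $w_1$, and for $1\le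 j\le d_R-1$ row-block $j$ equal to $H_G$ on $u_j$, $E_{r_G}$ on $w_j$ and $E_{r_G}$ on $w_{j+1}$ (the latter only if $j\le d_R-2$). $H^{M\text{-}B}_Z$ has row-block $0$ equal to $H_Z$ on $u_0$, and for $1\le i\le d_R-1$ row-block $i$ equal to $S$ on $u_0$ (only if $i=1$), $E_{n_G}$ on $u_{i-1}$ (only if $i\ge 2$), $E_{n_G}$ on $u_i$, and $H_G^{\mathrm T}$ on $w_i$. With $J'_X=\binom{J_{X,A}}{J_{X,C}}$, $J'_Z=\binom{J_{Z,A}}{J_{Z,C}}$: $J^{M\text{-}B}_X$ equals $J'_X$ on $u_0$, $J'_XS^{\mathrm T}$ on each $u_j$ ($1\le j\le d_R-1$) and $0$ on all $w_j$; $J^{M\text{-}B}_Z$ equals $J'_Z$ on $u_0$ and $0$ elsewhere. The block $u_{d_R-1}$ is called the open boundary. *)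

(* Defs.v *)
From HB Require Import structures.
From mathcomp Require Import all_boot all_order all_algebra.
Import Order.TTheory GRing.Theory Num.Theory.
Local Open Scope ring_scope.

Notation F2 := 'F_2.

Definition wt {m : nat} (v : 'rV[F2]_m) : nat := #|[set j | v 0 j != 0]|.

(* d(H,J) = min{ |e| : e in ker H, J e^T <> 0 }.  Convention: if no such e
   exists (min of the empty set = infinity) the value is m.+1, which exceeds
   the weight of every vector of length m. *)
Definition dist {m r k : nat} (H : 'M[F2]_(r, m)) (J : 'M[F2]_(k, m)) : nat :=
  \big[minn/m.+1]_(e : 'rV[F2]_m | (H *m e^T == 0) && (J *m e^T != 0)) wt e.

Definition code_dist {m rx rz kx kz : nat} (HX : 'M[F2]_(rx, m)) (HZ : 'M[F2]_(rz, m))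
  (JX : 'M[F2]_(kx, m)) (JZ : 'M[F2]_(kz, m)) : nat :=
  minn (dist HX JX) (dist HZ JZ).

Definition opnorm {nG n : nat} (S : 'M[F2]_(nG, n)) : rat :=
  \big[Num.max/0]_(x : 'rV[F2]_nG | x != 0) ((wt (x *m S))%:R / (wt x)%:R).

Definition mxF {R C : finType} (f : R -> C -> F2) : 'M[F2]_(#|R|, #|C|) :=
  \matrix_(i, j) f (enum_val i) (enum_val j).

(* Coordinates of a deformed code: block u_0 (inl (inl j)), blocks
   u_1..u_nu (inl (inr (a, t)) stands for u_{a+1}), blocks w_1..w_nw
   (inr (b, g) stands for w_{b+1}). *)
Definition Coord (n nu nG nw rG : nat) : finType :=
  (('I_n + ('I_nu * 'I_nG)) + ('I_nw * 'I_rG))%type.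

Definition restr0 {n nu nG nw rG : nat} (v : 'rV[F2]_#|Coord n nu nG nw rG|) : 'rV[F2]_n :=
  \row_j v 0 (enum_rank (inl (inl j) : Coord n nu nG nw rG)).

Definition ext0 {n : nat} (nu nG nw rG : nat) (h : 'rV[F2]_n) : 'rV[F2]_#|Coord n nu nG nw rG| :=
  \row_c match (enum_val c : Coord n nu nG nw rG) with
         | inl (inl j) => h 0 j
         | _ => 0
         end.

(* X-check matrix of the deformed code (u-blocks u_1..u_{dR-1}, w-blocks
   w_1..w_nw; nw = dR for the measurement sticker, nw = dR-1 for the branch
   sticker).  Row block 0 = rows inl i; row block j = a+1 = rows inr (a, g). *)
Definition HXd_f {n rX nG rG : nat} (dR nw : nat) (H_X : 'M[F2]_(rX, n))
  (T : 'M[F2]_(rX, rG)) (H_G : 'M[F2]_(rG, nG))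
  (r : ('I_rX + ('I_dR.-1 * 'I_rG))%type) (c : Coord n dR.-1 nG nw rG) : F2 :=
  match r, c with
  | inl i, inl (inl j) => H_X i j
  | inl i, inr (b, g) => if val b == 0%N then T i g else 0
  | inr (a, g), inl (inr (a', t)) => if a' == a then H_G g t else 0
  | inr (a, g), inr (b, g') =>
      (((val b == val a) || (val b == (val a).+1)) && (g == g'))%:R
  | _, _ => 0
  end.

Definition HXd {n rX nG rG : nat} (dR nw : nat) (H_X : 'M[F2]_(rX, n))
  (T : 'M[F2]_(rX, rG)) (H_G : 'M[F2]_(rG, nG)) :=
  mxF (HXd_f dR nw H_X T H_G).

(* Z-check matrix of the deformed code.  Row block 0 = rows inl i;
   row block i = b+1 (1 <= i <= nw) = rows inr (b, t). *)
Definition HZd_f {n rZ nG rG : nat} (dR nw : nat) (H_Z : 'M[F2]_(rZ, n))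
  (S : 'M[F2]_(nG, n)) (H_G : 'M[F2]_(rG, nG))
  (r : ('I_rZ + ('I_nw * 'I_nG))%type) (c : Coord n dR.-1 nG nw rG) : F2 :=
  match r, c with
  | inl i, inl (inl j) => H_Z i j
  | inr (b, t), inl (inl j) => if val b == 0%N then S t j else 0
  | inr (b, t), inl (inr (a, t')) =>
      ((((val a).+1 == val b) || (val a == val b)) && (t == t'))%:R
  | inr (b, t), inr (b', g) => if val b' == val b then H_G g t else 0
  | _, _ => 0
  end.

Definition HZd {n rZ nG rG : nat} (dR nw : nat) (H_Z : 'M[F2]_(rZ, n))
  (S : 'M[F2]_(nG, n)) (H_G : 'M[F2]_(rG, nG)) :=
  mxF (HZd_f dR nw H_Z S H_G).

Definition JXMM_f {n nG rG c : nat} (dR : nat) (J_XC : 'M[F2]_(c, n))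
  (S : 'M[F2]_(nG, n)) (gamma : 'M[F2]_(c, rG))
  (r : 'I_c) (x : Coord n dR.-1 nG dR rG) : F2 :=
  match x with
  | inl (inl j) => J_XC r j
  | inl (inr (a, t)) => (J_XC *m S^T) r t
  | inr (b, g) => if (val b).+1 == dR then gamma r g else 0
  end.

Definition JXMM {n nG rG c : nat} (dR : nat) (J_XC : 'M[F2]_(c, n))
  (S : 'M[F2]_(nG, n)) (gamma : 'M[F2]_(c, rG)) :=
  mxF (JXMM_f dR J_XC S gamma).

Definition JXMB_f {n nG rG k : nat} (dR : nat) (JX' : 'M[F2]_(k, n))
  (S : 'M[F2]_(nG, n)) (r : 'I_k) (x : Coord n dR.-1 nG dR.-1 rG) : F2 :=
  match x with
  | inl (inl j) => JX' r j
  | inl (inr (a, t)) => (JX' *m S^T) r t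
  | inr _ => 0
  end.

Definition JXMB {n nG k : nat} (rG dR : nat) (JX' : 'M[F2]_(k, n))
  (S : 'M[F2]_(nG, n)) :=
  mxF (@JXMB_f n nG rG k dR JX' S).

Definition JZd_f {n k : nat} (nu nG nw rG : nat) (JZ' : 'M[F2]_(k, n))
  (r : 'I_k) (x : Coord n nu nG nw rG) : F2 :=
  match x with
  | inl (inl j) => JZ' r j
  | _ => 0
  end.

Definition JZd {n k : nat} (nu nG nw rG : nat) (JZ' : 'M[F2]_(k, n)) :=
  mxF (JZd_f nu nG nw rG JZ').

(* (bar J_Z^{-1})^T J_X ; its top q rows are J_{X,A}, its bottom rows J_{X,C} *)
Definition JXprime {n q c : nat} (Jbar : 'M[F2]_(q + c)) (J_X : 'M[F2]_(q + c, n)) :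
  'M[F2]_(q + c, n) := (invmx Jbar)^T *m J_X.

Definition open_supp {n nG rG : nat} (dR : nat)
  (v : 'rV[F2]_#|Coord n dR.-1 nG dR.-1 rG|) : Prop :=
  forall x : Coord n dR.-1 nG dR.-1 rG, v 0 (enum_rank x) != 0 ->
    match x with
    | inl (inr (a, _)) => (val a).+1 == dR.-1
    | _ => false
    end.

(* Main.v *)
Require Import Defs.
From HB Require Import structures.
From mathcomp Require Import all_boot all_order all_algebra.
From mathcomp Require Import zify.
Import Order.TTheory GRing.Theory Num.Theory.
Local Open Scope ring_scope.


Lemma F2_addxx (x : F2) : x + x = 0.
Proof. by case: x => [[|[|k]] Hk] //; apply: val_inj => /=; compute. Qed.
Lemma F2_opp (x : F2) : - x = x.
Proof. by apply/eqP; rewrite -subr_eq0 -opprD F2_addxx oppr0. Qed.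
Lemma F2_cases (x : F2) : x = 0 \/ x = 1.
Proof. case: x => [[|[|k]] Hk] //; [left|right]; exact: val_inj. Qed.
Goal forall x y : rat, Num.max x y = Order.max x y. by []. Qed.

Section Vec.
Variable C : finType.
Definition fv (v : 'rV[F2]_#|C|) (c : C) := v 0 (enum_rank c).
Definition vec_of (f : C -> F2) : 'rV[F2]_#|C| := \row_i f (enum_val i).
Lemma fv_vec f c : fv (vec_of f) c = f c.
Proof. by rewrite /fv /vec_of mxE enum_rankK. Qed.
Lemma vecP (u v : 'rV[F2]_#|C|) : (forall c, fv u c = fv v c) -> u = v.
Proof. move=> H; apply/rowP => i; rewrite -(enum_valK i); exact: H. Qed.
Lemma sum_enum (F : 'I_#|C| -> F2) : \sum_i F i = \sum_c F (enum_rank c).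
Proof. exact: (reindex enum_rank (onW_bij _ (@enum_rank_bij C))). Qed.
Lemma sum_enumn (F : 'I_#|C| -> nat) : (\sum_i F i = \sum_c F (enum_rank c))%N.
Proof. exact: (reindex enum_rank (onW_bij _ (@enum_rank_bij C))). Qed.
Lemma fvD u v c : fv (u + v) c = fv u c + fv v c.
Proof. by rewrite /fv mxE. Qed.
Lemma fv0 c : fv 0 c = 0.
Proof. by rewrite /fv mxE. Qed.
End Vec.
Arguments fv {C}. Arguments vec_of {C}.

Lemma mul_mxF (R C : finType) (f : R -> C -> F2) (x : 'rV[F2]_#|R|) c :
  fv (x *m mxF f) c = \sum_r fv x r * f r c.
Proof. rewrite /fv mxE sum_enum; apply: eq_bigr => r _; by rewrite /mxF mxE !enum_rankK. Qed.

Lemma mxF_mul (R C : finType) (f : R -> C -> F2) (e : 'rV[F2]_#|C|) r :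
  (mxF f *m e^T) (enum_rank r) 0 = \sum_c f r c * fv e c.
Proof. rewrite mxE sum_enum; apply: eq_bigr => c _; by rewrite /mxF /fv !mxE !enum_rankK. Qed.

Lemma mxF_ker (R C : finType) (f : R -> C -> F2) (e : 'rV[F2]_#|C|) :
  (mxF f *m e^T == 0) = [forall r, \sum_c f r c * fv e c == 0].
Proof.
apply/eqP/forallP => [H r|H]; first by rewrite -mxF_mul H mxE.
apply/matrixP => i j; rewrite ord1 -(enum_valK i) mxF_mul mxE; exact/eqP.
Qed.

Section CoordSum.
Variables n nu nG nw rG : nat.
Lemma sum_Coord (F : Coord n nu nG nw rG -> F2) :
  \sum_c F c = \sum_j F (inl (inl j)) + \sum_a \sum_t F (inl (inr (a, t)))
     + \sum_b \sum_g F (inr (b, g)).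
Proof.
rewrite big_sumType /= big_sumType /= !pair_big /=.
by congr (_ + _ + _); apply: eq_bigr => -[].
Qed.
Lemma sum_Coordn (F : Coord n nu nG nw rG -> nat) :
  (\sum_c F c = \sum_j F (inl (inl j)) + \sum_a \sum_t F (inl (inr (a, t)))
     + \sum_b \sum_g F (inr (b, g)))%N.
Proof.
rewrite big_sumType /= big_sumType /= !pair_big /=.
by congr (_ + _ + _)%N; apply: eq_bigr => -[].
Qed.
End CoordSum.
Lemma bigminn_ge (I : finType) (P : pred I) (F : I -> nat) x0 (Q : nat -> Prop) :
  Q x0 -> (forall i, P i -> Q (F i)) -> Q (\big[minn/x0]_(i | P i) F i).
Proof.
move=> H0 H; apply: big_ind => // a b Ha Hb; rewrite /minn; by case: ifP.
Qed.

Lemma wtE m (v : 'rV[F2]_m) : wt v = (\sum_j (v (0%R:'I_1) j != 0%R : nat))%N.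
Proof.
rewrite /wt -sum1_card big_mkcond /=; apply: eq_bigr => j _; rewrite inE; by case: ifP.
Qed.

Lemma mxF2_opp m k (M : 'M[F2]_(m, k)) : - M = M.
Proof. by apply/matrixP => i j; rewrite mxE F2_opp. Qed.
Lemma mxF2_addxx m k (M : 'M[F2]_(m, k)) : M + M = 0.
Proof. by apply/matrixP => i j; rewrite !mxE F2_addxx. Qed.
Lemma mxF2_eq m k (M N : 'M[F2]_(m, k)) : M + N = 0 -> M = N.
Proof. by move=> H; rewrite -[N]mxF2_opp; apply/eqP; rewrite -subr_eq0 opprK H. Qed.

Lemma sum_insub (m k : nat) (F : 'I_m -> F2) :
  \sum_(b : 'I_m) (if val b == k then F b else 0) =
  match insub k with Some b => F b | None => 0 end.
Proof.
case: insubP => [b _ <-|Hk].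
  rewrite (bigD1 b) //= eqxx big1 ?addr0 // => b' Hb'; case: ifP => // /eqP/val_inj E.
  by rewrite E eqxx in Hb'.
by rewrite big1 // => b _; case: ifP => // /eqP E; rewrite -E ltn_ord in Hk.
Qed.

Lemma sum_insubn (m k : nat) (F : 'I_m -> nat) :
  (\sum_(b : 'I_m) (if val b == k then F b else 0) =
  match insub k with Some b => F b | None => 0 end)%N.
Proof.
case: insubP => [b _ <-|Hk].
  rewrite (bigD1 b) //= eqxx big1 ?addn0 // => b' Hb'; case: ifP => // /eqP/val_inj E.
  by rewrite E eqxx in Hb'.
by rewrite big1 // => b _; case: ifP => // /eqP E; rewrite -E ltn_ord in Hk.
Qed.

Lemma fv_ext0 n nu nG nw rG (h : 'rV[F2]_n) (c : Coord n nu nG nw rG) :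
  fv (ext0 nu nG nw rG h) c = match c with inl (inl j) => h 0 j | _ => 0 end.
Proof. by rewrite /fv /ext0 mxE enum_rankK. Qed.

Lemma ext0D n nu nG nw rG (h h' : 'rV[F2]_n) :
  ext0 nu nG nw rG (h + h') = ext0 nu nG nw rG h + ext0 nu nG nw rG h'.
Proof. apply: vecP => c; rewrite fvD !fv_ext0; case: c => [[j|]|] //=; by rewrite ?mxE ?addr0. Qed.

Lemma restr0E n nu nG nw rG (v : 'rV[F2]_#|Coord n nu nG nw rG|) j :
  restr0 v 0 j = fv v (inl (inl j)).
Proof. by rewrite /restr0 mxE. Qed.

Lemma sum_pair (A B : finType) (F : A * B -> F2) :
  \sum_p F p = \sum_a \sum_b F (a, b).
Proof. by rewrite pair_big; apply: eq_bigr => -[]. Qed.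
Lemma bigminn_le (I : finType) (P : pred I) (F : I -> nat) x0 j : P j ->
  (\big[minn/x0]_(i | P i) F i <= F j)%N.
Proof.
have := mem_index_enum j; rewrite unlock; elim: (index_enum I) => //= i l ih.
rewrite inE => /orP [/eqP-> ->|/ih H Pj]; first by rewrite geq_minl.
by case: ifPn => _; [rewrite geq_min H ?orbT|apply: H].
Qed.


Section Checks.
Variables (n rX rZ nG rG dR nw : nat).
Variables (H_X : 'M[F2]_(rX, n)) (H_Z : 'M[F2]_(rZ, n)) (T : 'M[F2]_(rX, rG))
  (H_G : 'M[F2]_(rG, nG)) (S : 'M[F2]_(nG, n)).

Lemma restr0_HX x :
  restr0 (x *m HXd dR nw H_X T H_G) = (\row_i fv x (inl i)) *m H_X.
Proof.
apply/rowP => j; rewrite restr0E mul_mxF big_sumType /= [X in _ + X]big1 ?addr0.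
  by rewrite mxE; apply: eq_bigr => i _; rewrite mxE.
by case=> a g _; rewrite mulr0.
Qed.

Lemma partI (v : 'rV[F2]_n) :
  (v <= H_X)%MS <-> exists h, (h <= HXd dR nw H_X T H_G)%MS /\ restr0 h = v.
Proof.
split.
  case/submxP => x ->.
  exists (vec_of (fun r => match r with inl i => x 0 i | _ => 0 end) *m HXd dR nw H_X T H_G).
  split; first exact: submxMl.
  rewrite restr0_HX; congr (_ *m _); apply/rowP => i; by rewrite mxE fv_vec.
case=> h [/submxP [x ->] <-]; rewrite restr0_HX; exact: submxMl.
Qed.

Lemma partII (h : 'rV[F2]_n) :
  (h <= H_Z)%MS -> (ext0 dR.-1 nG nw rG h <= HZd dR nw H_Z S H_G)%MS.
Proof.
case/submxP => x ->.
apply/submxP; exists (vec_of (fun r => match r with inl i => x 0 i | _ => 0 end)).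
apply: vecP => c; rewrite mul_mxF fv_ext0 big_sumType /= [X in _ + X]big1 ?addr0;
  last by move=> [b t] _; rewrite fv_vec mul0r.
case: c => [[j|[a t]]|[b g]] /=.
- rewrite mxE; apply: eq_bigr => i _; by rewrite fv_vec.
- by rewrite big1 // => i _; rewrite mulr0.
- by rewrite big1 // => i _; rewrite mulr0.
Qed.
End Checks.

Lemma count_ord (m k : nat) (F : F2) :
  \sum_(b : 'I_m) (if val b == k then F else 0) = (k < m)%N%:R * F.
Proof.
rewrite (@sum_insub m k (fun _ => F)); case: insubP => [b Hk <-|Hk]; first by rewrite ltn_ord mul1r.
by rewrite (negbTE Hk) mul0r.
Qed.

Section Zcomb.
Variables (n rZ nG rG dR nw : nat).
Variables (H_Z : 'M[F2]_(rZ, n)) (H_G : 'M[F2]_(rG, nG)) (S : 'M[F2]_(nG, n)).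

Definition xz (y : 'rV[F2]_nG) : 'rV[F2]_#|{: 'I_rZ + 'I_nw * 'I_nG}| :=
  vec_of (fun r => match r with inr (b,t) => y 0 t | inl _ => 0 end).

Lemma zcomb (y : 'rV[F2]_nG) (c : Coord n dR.-1 nG nw rG) :
  fv (xz y *m HZd dR nw H_Z S H_G) c =
  match c with
  | inl (inl j) => (0 < nw)%N%:R * (y *m S) 0 j
  | inl (inr (a, t)) => (((val a < nw)%N%:R + ((val a).+1 < nw)%N%:R) * y 0 t)
  | inr (b, g) => (y *m H_G^T) 0 g
  end.
Proof.
rewrite mul_mxF big_sumType /= big1 ?add0r; last by move=> i _; rewrite fv_vec mul0r.
rewrite sum_pair /=.
case: c => [[j|[a t]]|[b g]] /=.
- rewrite -count_ord; apply: eq_bigr => b _; rewrite mxE.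
  case: ifP => _; last by rewrite big1 // => t _; rewrite mulr0.
  by apply: eq_bigr => t _; rewrite fv_vec.
- rewrite mulrDl -!count_ord -big_split /=; apply: eq_bigr => b _.
  rewrite (bigD1 t) //= big1 ?addr0; last first.
    by move=> t' /negbTE Ht; rewrite Ht andbF mulr0.
  rewrite eqxx andbT fv_vec.
  case: (eqVneq (val b) a) => [<-|Hab].
    by rewrite orbT mulr1 (ltn_eqF (ltnSn _)) addr0.
  rewrite orbF add0r eq_sym.
  by case: eqP => _; rewrite ?mulr1 ?mulr0.
- rewrite mxE (bigD1 b) //= [X in _ + X]big1 ?addr0; last first.
    by move=> b' Hb'; rewrite big1 // => t _; rewrite val_eqE eq_sym (negbTE Hb') mulr0.
  rewrite eqxx; apply: eq_bigr => t _; by rewrite fv_vec mxE.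
Qed.
End Zcomb.

Lemma getY n q nG rG (z : 'rV[F2]_n) (J_ZA : 'M[F2]_(q, n)) (H_G : 'M[F2]_(rG, nG)) S :
  (z <= J_ZA)%MS -> (J_ZA <= kermx H_G^T *m S)%MS ->
  exists y : 'rV[F2]_nG, y *m H_G^T = 0 /\ z = y *m S.
Proof.
move=> H1 H2; have /submxP [w ->] := submx_trans H1 H2.
exists (w *m kermx H_G^T); by rewrite -mulmxA mulmx_ker mulmx0 mulmxA.
Qed.

Lemma partV_M n rZ nG rG dR (H_Z : 'M[F2]_(rZ, n)) (H_G : 'M[F2]_(rG, nG)) S
  (y : 'rV[F2]_nG) : (2 <= dR)%N -> y *m H_G^T = 0 ->
  (ext0 dR.-1 nG dR rG (y *m S) <= HZd dR dR H_Z S H_G)%MS.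
Proof.
move=> HdR Hy; apply/submxP; exists (xz rZ nG dR y); apply: vecP => c.
rewrite zcomb fv_ext0; case: c => [[j|[a t]]|[b g]].
- by rewrite (leq_trans _ HdR) // mul1r.
- have Ha := ltn_ord a.
  have H1 : (val a < dR)%N := leq_trans Ha (leq_pred dR).
  have H2 : ((val a).+2 <= dR)%N by move: Ha; rewrite /=; generalize (nat_of_ord a) => k; lia.
  rewrite H1 H2.
  by rewrite F2_addxx mul0r.
- by rewrite Hy mxE.
Qed.

Lemma partV_B n rZ nG rG dR (H_Z : 'M[F2]_(rZ, n)) (H_G : 'M[F2]_(rG, nG)) S
  (y : 'rV[F2]_nG) : (2 <= dR)%N -> y *m H_G^T = 0 ->
  exists g, (g <= HZd dR dR.-1 H_Z S H_G)%MS /\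
    open_supp dR (ext0 dR.-1 nG dR.-1 rG (y *m S) + g).
Proof.
move=> HdR Hy; exists (xz rZ nG dR.-1 y *m HZd dR dR.-1 H_Z S H_G); split; first exact: submxMl.
move=> c; rewrite -/(fv _ c) fvD zcomb fv_ext0; case: c => [[j|[a t]]|[b g]].
- have ->: (0 < dR.-1)%N by rewrite -ltnS prednK // (leq_trans _ HdR).
  by rewrite mul1r F2_addxx eqxx.
- rewrite add0r ltn_ord; case: ltnP => Ha; first by rewrite F2_addxx mul0r eqxx.
  move=> _; rewrite eqn_leq Ha andbT; exact: ltn_ord.
- by rewrite add0r Hy mxE eqxx.
Qed.

Lemma restr0_JXMM n nG rG c dR (J_XC : 'M[F2]_(c, n)) S (gamma : 'M[F2]_(c, rG)) x :
  restr0 (x *m @JXMM n nG rG c dR J_XC S gamma) = (\row_i fv x i) *m J_XC.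
Proof.
apply/rowP => j; rewrite restr0E mul_mxF mxE; apply: eq_bigr => i _; by rewrite mxE.
Qed.

Lemma restr0_JXMB n nG rG k dR (JX' : 'M[F2]_(k, n)) S x :
  restr0 (x *m @JXMB n nG k rG dR JX' S) = (\row_i fv x i) *m JX'.
Proof.
apply/rowP => j; rewrite restr0E mul_mxF mxE; apply: eq_bigr => i _; by rewrite mxE.
Qed.

Lemma JZd_ext n k nu nG nw rG (JZ' : 'M[F2]_(k, n)) x :
  x *m JZd nu nG nw rG JZ' = ext0 nu nG nw rG ((\row_i fv x i) *m JZ').
Proof.
apply: vecP => c; rewrite mul_mxF fv_ext0; case: c => [[j|[a t]]|[b g]] /=.
- rewrite mxE; apply: eq_bigr => i _; by rewrite mxE.
- by rewrite big1 // => i _; rewrite mulr0.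
- by rewrite big1 // => i _; rewrite mulr0.
Qed.

Lemma row_vec k (b : 'rV[F2]_k) : \row_i fv (vec_of (fun i : 'I_k => b 0 i)) i = b.
Proof. by apply/rowP => i; rewrite mxE fv_vec. Qed.

Section LinAlg.
Variables (n q c : nat) (J_X J_Z : 'M[F2]_(q + c, n)) (J_ZA : 'M[F2]_(q, n))
  (J_ZC : 'M[F2]_(c, n)) (Jbar : 'M[F2]_(q + c)).
Hypothesis HJ : J_X *m J_Z^T = 1%:M.
Hypothesis Hu : Jbar \in unitmx.
Hypothesis HZ : col_mx J_ZA J_ZC = Jbar *m J_Z.

Lemma JX_eq : J_X = Jbar^T *m JXprime Jbar J_X.
Proof. by rewrite /JXprime mulmxA -trmx_mul mulVmx // trmx1 mul1mx. Qed.

Lemma Jprime_dual : JXprime Jbar J_X *m (col_mx J_ZA J_ZC)^T = 1%:M.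
Proof.
rewrite HZ /JXprime trmx_mul mulmxA -(mulmxA _ J_X) HJ mulmx1 -trmx_mul mulmxV //.
exact: trmx1.
Qed.

Lemma Jprime_blocks :
  usubmx (JXprime Jbar J_X) *m J_ZA^T = 1%:M /\ dsubmx (JXprime Jbar J_X) *m J_ZA^T = 0.
Proof.
have := Jprime_dual; set J' := JXprime _ _.
rewrite -[J' in J' *m _]vsubmxK tr_col_mx mul_col_row scalar_mx_block.
by case/eq_block_mx => -> _ -> _.
Qed.

Lemma JZ_eq : J_Z = invmx Jbar *m col_mx J_ZA J_ZC.
Proof. by rewrite HZ mulKmx. Qed.

Lemma partIII (x : 'rV[F2]_n) : (x <= J_X)%MS -> x *m J_ZA^T = 0 ->
  exists b : 'rV[F2]_c, x = b *m dsubmx (JXprime Jbar J_X).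
Proof.
move=> /submxP [a ->] Hx.
have Ex : a *m J_X = lsubmx (a *m Jbar^T) *m usubmx (JXprime Jbar J_X)
   + rsubmx (a *m Jbar^T) *m dsubmx (JXprime Jbar J_X).
  by rewrite -mul_row_col hsubmxK vsubmxK -mulmxA -JX_eq.
move: Hx; rewrite Ex mulmxDl -!mulmxA (proj1 Jprime_blocks) (proj2 Jprime_blocks).
rewrite mulmx1 mulmx0 addr0 => ->.
by exists (rsubmx (a *m Jbar^T)); rewrite mul0mx add0r.
Qed.

Lemma partIIIB (x : 'rV[F2]_n) : (x <= J_X)%MS ->
  exists b : 'rV[F2]_(q + c), x = b *m JXprime Jbar J_X.
Proof. by case/submxP => a ->; exists (a *m Jbar^T); rewrite -mulmxA -JX_eq. Qed.

Lemma partIV (z : 'rV[F2]_n) : (z <= J_Z)%MS ->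
  exists b : 'rV[F2]_(q + c), z = lsubmx b *m J_ZA + rsubmx b *m J_ZC.
Proof.
case/submxP => a ->; exists (a *m invmx Jbar).
by rewrite -mul_row_col hsubmxK -mulmxA -JZ_eq.
Qed.

Lemma partIVB (z : 'rV[F2]_n) : (z <= J_Z)%MS ->
  exists b : 'rV[F2]_(q + c), z = b *m col_mx J_ZA J_ZC.
Proof. by case/submxP => a ->; exists (a *m invmx Jbar); rewrite -mulmxA -JZ_eq. Qed.
End LinAlg.

Lemma F2_eq (x y : F2) : x + y = 0 -> x = y.
Proof. by move=> H; rewrite -[y]F2_opp; apply/eqP; rewrite -subr_eq0 opprK H. Qed.

Section Dist.
Variables (n rX nG rG dR nw : nat).
Variables (H_X : 'M[F2]_(rX, n)) (T : 'M[F2]_(rX, rG))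
  (H_G : 'M[F2]_(rG, nG)) (S : 'M[F2]_(nG, n)).
Notation CT := (Coord n dR.-1 nG nw rG).
Variable e : 'rV[F2]_#|CT|.

Definition un (k : nat) : 'rV[F2]_nG :=
  \row_t match @insub _ _ 'I_dR.-1 k with Some a => fv e (inl (inr (a, t)) : CT) | None => 0 end.
Definition wn (k : nat) : 'rV[F2]_rG :=
  \row_g match @insub _ _ 'I_nw k with Some b => fv e (inr (b, g) : CT) | None => 0 end.

Hypothesis Hker : HXd dR nw H_X T H_G *m e^T = 0.

Lemma kerX r : \sum_c HXd_f dR nw H_X T H_G r c * fv e c = 0.
Proof. by move/eqP: Hker; rewrite mxF_ker => /forallP /(_ r) /eqP. Qed.

Lemma K0 : restr0 e *m H_X^T = wn 0 *m T^T.
Proof.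
apply/rowP => i; apply: F2_eq; have := kerX (inl i); rewrite sum_Coord /=.
rewrite [X in _ + X + _]big1 ?addr0; last by move=> a _; rewrite big1 // => t _; rewrite mul0r.
move=> <-; rewrite !mxE; congr (_ + _).
  by apply: eq_bigr => j _; rewrite restr0E mxE mulrC.
rewrite (eq_bigr (fun b : 'I_nw => if val b == 0%N then \sum_g T i g * fv e (inr (b, g) : CT) else 0)); last first.
  move=> b _; case: ifP => _ //; by rewrite big1 // => g _; rewrite mul0r.
rewrite sum_insub /wn; case: insubP => [b _ _|_].
  by apply: eq_bigr => g _; rewrite !mxE mulrC.
by rewrite big1 // => g _; rewrite !mxE mul0r.
Qed.

Lemma sum_sel (m : nat) (P : bool) (g : 'I_m) (F : 'I_m -> F2) :
  \sum_g' ((P && (g == g'))%:R * F g') = if P then F g else 0.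
Proof.
case: P; last by rewrite big1 // => g' _; rewrite mul0r.
rewrite (bigD1 g) //= eqxx mul1r big1 ?addr0 // => g' Hg.
by rewrite eq_sym (negbTE Hg) mul0r.
Qed.

Lemma Ka (a : 'I_dR.-1) : un (val a) *m H_G^T + wn (val a) + wn (val a).+1 = 0.
Proof.
apply/rowP => g; rewrite [RHS]mxE; have := kerX (inr (a, g)); rewrite sum_Coord /=.
rewrite big1 ?add0r; last by move=> j _; rewrite mul0r.
move=> <-; rewrite -addrA !mxE; congr (_ + _).
  rewrite (bigD1 a) //= [X in _ + X]big1 ?addr0; last first.
    by move=> a' Ha; rewrite big1 // => t _; rewrite (negbTE Ha) mul0r.
  rewrite eqxx /un valK; apply: eq_bigr => t _; by rewrite !mxE mulrC.
rewrite -sum_insub -sum_insub -big_split /=; apply: eq_bigr => b _.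
rewrite -(@sum_sel _ (val b == val a) g (fun g' => fv e (inr (b, g') : CT))).
rewrite -(@sum_sel _ (val b == (val a).+1) g (fun g' => fv e (inr (b, g') : CT))) -big_split /=.
apply: eq_bigr => g' _; rewrite -mulrDl; congr (_ * _).
case: (eqVneq (val b) (val a)) => [->|_]; first by rewrite (ltn_eqF (ltnSn _)) /= addr0.
by rewrite /= add0r.
Qed.
Lemma mxF2_sw m k (A B C : 'M[F2]_(m, k)) : A + B = C -> B = C + A.
Proof. by move=> H; rewrite -H addrC addrA mxF2_addxx add0r. Qed.

Lemma chain k : (k <= dR.-1)%N -> wn 0 = wn k + (\sum_(0 <= a < k) un a) *m H_G^T.
Proof.
elim: k => [|k IH] Hk; first by rewrite big_geq // mul0mx addr0.
rewrite IH ?(ltnW Hk) // big_nat_recr //= mulmxDl.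
have := Ka (Ordinal Hk) => /= /mxF2_eq /mxF2_sw ->.
by rewrite [_ + un k *m _]addrC !addrA.
Qed.
Lemma wt_split : (wt (restr0 e) + \sum_(0 <= a < dR.-1) wt (un a)
   + \sum_(0 <= b < nw) wt (wn b) = wt e)%N.
Proof.
rewrite [wt e]wtE sum_enumn sum_Coordn wtE !big_mkord.
congr (_ + _ + _)%N.
- by apply: eq_bigr => j _; rewrite restr0E.
- apply: eq_bigr => a _; rewrite wtE /un valK; apply: eq_bigr => t _; by rewrite mxE.
- apply: eq_bigr => b _; rewrite wtE /wn valK; apply: eq_bigr => t _; by rewrite mxE.
Qed.
End Dist.

Lemma wtD m (u v : 'rV[F2]_m) : (wt (u + v) <= wt u + wt v)%N.
Proof.
rewrite !wtE -big_split /=; apply: leq_sum => j _; rewrite mxE.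
by case: (F2_cases (u 0 j)) => ->; case: (F2_cases (v 0 j)) => ->.
Qed.

Lemma wt0 m : wt (0 : 'rV[F2]_m) = 0%N.
Proof. by rewrite wtE big1 // => j _; rewrite mxE eqxx. Qed.

Lemma wt_sum m k (f : nat -> 'rV[F2]_m) :
  (wt (\sum_(0 <= a < k) f a) <= \sum_(0 <= a < k) wt (f a))%N.
Proof.
elim: k => [|k IH]; first by rewrite !big_geq // wt0.
rewrite !big_nat_recr //=; apply: leq_trans; first exact: wtD.
by rewrite leq_add2r.
Qed.

Lemma wt_gt0 m (v : 'rV[F2]_m) : v != 0 -> (0 < wt v)%N.
Proof.
move=> Hv; rewrite wtE; case: (pickP (fun j => v 0 j != 0)) => [j Hj|H].
  by rewrite (bigD1 j) //= Hj.
by case/eqP: Hv; apply/rowP => j; rewrite mxE; move: (H j) => /negbFE /eqP.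
Qed.

Lemma opnorm_ge (nG n : nat) (S : 'M[F2]_(nG, n)) (x : 'rV[F2]_nG) : x != 0 ->
  (wt (x *m S))%:R / (wt x)%:R <= opnorm S.
Proof. move=> Hx; rewrite /opnorm; exact: (le_bigmax_cond _ (fun x => (wt (x *m S))%:R / (wt x)%:R) Hx). Qed.

Lemma opnorm_ge0 (nG n : nat) (S : 'M[F2]_(nG, n)) : 0 <= opnorm S.
Proof. exact: bigmax_ge_id. Qed.

Lemma wt_mul_le (nG n : nat) (S : 'M[F2]_(nG, n)) (y : 'rV[F2]_nG) :
  (wt (y *m S))%:R <= opnorm S * (wt y)%:R.
Proof.
case: (eqVneq y 0) => [->|Hy]; first by rewrite mul0mx !wt0 mulr0.
have Hp : (0 : rat) < (wt y)%:R by rewrite ltr0n wt_gt0.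
by rewrite -ler_pdivrMr // opnorm_ge.
Qed.

Lemma opnorm_ge1 (nG n : nat) (S : 'M[F2]_(nG, n)) : S != 0 -> 1 <= opnorm S.
Proof.
move=> HS.
have [[t j] /= Htj|H] := pickP (fun p : 'I_nG * 'I_n => S p.1 p.2 != 0); last first.
  case/eqP: HS; apply/matrixP => t j; move: (H (t, j)) => /= /negbFE /eqP ->.
  by rewrite mxE.
have Hx : delta_mx 0 t != 0 :> 'rV[F2]_nG.
  by apply/eqP => /matrixP /(_ 0 t); rewrite !mxE !eqxx.
have := opnorm_ge _ _ S _ Hx; apply: le_trans.
have -> : wt (delta_mx 0 t : 'rV[F2]_nG) = 1%N.
  rewrite wtE (bigD1 t) //= big1 ?addn0; first by rewrite mxE !eqxx.
  by move=> i Hi; rewrite mxE (negbTE Hi) andbF eqxx.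
rewrite divr1 ler1n wt_gt0 //; apply/eqP => /matrixP /(_ 0 j); rewrite -rowE !mxE.
by move/eqP: Htj.
Qed.

Section XCore.
Variables (n rX nG rG dR nw : nat).
Variables (H_X : 'M[F2]_(rX, n)) (T : 'M[F2]_(rX, rG))
  (H_G : 'M[F2]_(rG, nG)) (S : 'M[F2]_(nG, n)).
Variable e : 'rV[F2]_#|Coord n dR.-1 nG nw rG|.
Hypothesis Hker : HXd dR nw H_X T H_G *m e^T = 0.
Hypothesis Hcomp : H_X *m S^T = T *m H_G.
Hypothesis HS : S != 0.
Local Notation u := (un n nG rG dR nw e).
Local Notation w := (wn n nG rG dR nw e).

Lemma wt_sub_le k : (k <= dR.-1)%N ->
  (wt (restr0 e + (\sum_(0 <= a < k) u a) *m S))%:R <= opnorm S * (wt e)%:R :> rat.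
Proof.
move=> Hk; have H1 := opnorm_ge1 _ _ _ HS.
apply: le_trans (_ : (wt (restr0 e))%:R + opnorm S * (\sum_(0 <= a < dR.-1) wt (u a))%:R <= _).
  apply: le_trans (_ : (wt (restr0 e))%:R + (wt ((\sum_(0 <= a < k) u a) *m S))%:R <= _).
    by rewrite -natrD ler_nat wtD.
  rewrite lerD2l; apply: (le_trans (wt_mul_le _ _ S _)); apply: ler_wpM2l; first exact: opnorm_ge0.
  rewrite ler_nat; apply: leq_trans (wt_sum _ _ _) _.
  by rewrite (@big_cat_nat _ _ _ k 0 dR.-1) //= leq_addr.
rewrite -(wt_split n nG rG dR nw e) !natrD !mulrDr -[X in X <= _]addr0.
apply: lerD; last by rewrite mulr_ge0 ?opnorm_ge0.
apply: lerD => //; by rewrite -[X in X <= _]mul1r ler_wpM2r.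
Qed.

Lemma Xcore k : (k <= dR.-1)%N -> w k = 0 ->
  (restr0 e + (\sum_(0 <= a < k) u a) *m S) *m H_X^T = 0 /\
  w 0 = (\sum_(0 <= a < k) u a) *m H_G^T.
Proof.
move=> Hk Hw; have Hc := @chain n rX nG rG dR nw H_X T H_G e Hker k Hk; rewrite Hw add0r in Hc.
split => //; rewrite mulmxDl (@K0 n rX nG rG dR nw H_X T H_G e Hker) -mulmxA -(trmxK (S *m H_X^T)) trmx_mul trmxK Hcomp trmx_mul mulmxA -Hc.
exact: mxF2_addxx.
Qed.
End XCore.

Lemma eqS_pred k m : (0 < m)%N -> (k.+1 == m) = (k == m.-1).
Proof. by case: m. Qed.

Lemma mid_sum n nG rG dR nw k (M : 'M[F2]_(k, nG)) (e : 'rV[F2]_#|Coord n dR.-1 nG nw rG|) r :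
  \sum_(a : 'I_dR.-1) \sum_t M r t * fv e (inl (inr (a, t)) : Coord n dR.-1 nG nw rG) =
  ((\sum_(0 <= a < dR.-1) un n nG rG dR nw e a) *m M^T) 0 r.
Proof.
rewrite mulmx_suml summxE big_mkord; apply: eq_bigr => a _; rewrite mxE /un valK.
by apply: eq_bigr => t _; rewrite !mxE mulrC.
Qed.

Lemma JXMM_e n nG rG c dR (J_XC : 'M[F2]_(c, n)) S (gamma : 'M[F2]_(c, rG))
  (e : 'rV[F2]_#|Coord n dR.-1 nG dR rG|) r : (0 < dR)%N ->
  (JXMM dR J_XC S gamma *m e^T) (enum_rank r) 0 =
  (restr0 e *m J_XC^T + (\sum_(0 <= a < dR.-1) un n nG rG dR dR e a) *m (J_XC *m S^T)^T
    + wn n nG rG dR dR e dR.-1 *m gamma^T) 0 r.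
Proof.
move=> HdR; rewrite mxF_mul sum_Coord /= [RHS]mxE [X in _ = X + _]mxE -mid_sum.
congr (_ + _ + _).
  by rewrite mxE; apply: eq_bigr => j _; rewrite restr0E mxE mulrC.
rewrite mxE.
rewrite (eq_bigr (fun b : 'I_dR => if val b == dR.-1 then
   \sum_g gamma r g * fv e (inr (b, g) : Coord n dR.-1 nG dR rG) else 0)); last first.
  move=> b _; rewrite eqS_pred //; case: ifP => _ //.
  by rewrite big1 // => g _; rewrite mul0r.
rewrite sum_insub /wn; case: insubP => [b _ _|_].
  by apply: eq_bigr => g _; rewrite !mxE mulrC.
by rewrite big1 // => g _; rewrite !mxE mul0r.
Qed.

Lemma JXMB_e n nG rG k dR (JX' : 'M[F2]_(k, n)) S
  (e : 'rV[F2]_#|Coord n dR.-1 nG dR.-1 rG|) r :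
  (JXMB rG dR JX' S *m e^T) (enum_rank r) 0 =
  (restr0 e *m JX'^T + (\sum_(0 <= a < dR.-1) un n nG rG dR dR.-1 e a) *m (JX' *m S^T)^T) 0 r.
Proof.
rewrite mxF_mul sum_Coord /= [RHS]mxE -mid_sum [X in _ + X = _]big1 ?addr0; last first.
  by move=> b _; rewrite big1 // => g _; rewrite mul0r.
congr (_ + _); rewrite mxE; by apply: eq_bigr => j _; rewrite restr0E mxE mulrC.
Qed.

Lemma col_nz (R : finType) (M : 'M[F2]_(#|R|, 1)) (k : nat) (V : 'rV[F2]_k) (f : R -> 'I_k) :
  (forall r, M (enum_rank r) 0 = V 0 (f r)) -> M != 0 -> V != 0.
Proof.
move=> H; apply: contra => /eqP V0; apply/eqP/matrixP => i j.
by rewrite ord1 -(enum_valK i) H V0 !mxE.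
Qed.

Lemma mxF2_sw2 m k (A B C : 'M[F2]_(m, k)) : C = A + B -> A = C + B.
Proof. by move=> ->; rewrite -addrA mxF2_addxx addr0. Qed.
Arguments mxF2_sw2 {m k A B C}.

Lemma mxF2_cancel m k (A B C : 'M[F2]_(m, k)) : A + B + (C + B) = A + C.
Proof. by rewrite [C + B]addrC addrA -(addrA A B B) mxF2_addxx addr0. Qed.

Lemma wt_ge_dR n nG rG dR nw (e : 'rV[F2]_#|Coord n dR.-1 nG nw rG|) :
  (forall k : 'I_nw, wn n nG rG dR nw e k != 0) -> (nw <= wt e)%N.
Proof.
move=> H; rewrite -(wt_split n nG rG dR nw e); apply: leq_trans (leq_addl _ _).
rewrite big_mkord; apply: leq_trans (_ : \sum_(b < nw) 1 <= _)%N.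
  by rewrite sum_nat_const card_ord muln1.
by apply: leq_sum => b _; apply: wt_gt0.
Qed.

Lemma K0Z n rZ nG rG dR nw (H_Z : 'M[F2]_(rZ, n)) S (H_G : 'M[F2]_(rG, nG))
  (e : 'rV[F2]_#|Coord n dR.-1 nG nw rG|) :
  HZd dR nw H_Z S H_G *m e^T = 0 -> restr0 e *m H_Z^T = 0.
Proof.
move/eqP; rewrite mxF_ker => /forallP H; apply/rowP => i; rewrite !mxE.
move/eqP: (H (inl i)); rewrite sum_Coord /= [X in _ + X + _]big1; last first.
  by move=> a _; rewrite big1 // => t _; rewrite mul0r.
rewrite [X in _ + _ + X]big1; last by move=> b _; rewrite big1 // => t _; rewrite mul0r.
rewrite !addr0 => H'; rewrite -[RHS]H'; apply: eq_bigr => j _; by rewrite restr0E mxE mulrC.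
Qed.

Lemma JZd_e n k nu nG nw rG (JZ' : 'M[F2]_(k, n)) (e : 'rV[F2]_#|Coord n nu nG nw rG|) r :
  (JZd nu nG nw rG JZ' *m e^T) (enum_rank r) 0 = (restr0 e *m JZ'^T) 0 r.
Proof.
rewrite mxF_mul sum_Coord /= [X in _ + X + _]big1; last first.
  by move=> a _; rewrite big1 // => t _; rewrite mul0r.
rewrite [X in _ + _ + X]big1; last by move=> b _; rewrite big1 // => t _; rewrite mul0r.
rewrite !addr0 mxE; apply: eq_bigr => j _; by rewrite restr0E mxE mulrC.
Qed.

Lemma distX_M n rX nG rG c dR (H_X : 'M[F2]_(rX, n)) T (H_G : 'M[F2]_(rG, nG)) S
  (J_XC : 'M[F2]_(c, n)) gamma (d : nat) :
  (2 <= dR)%N -> H_X *m S^T = T *m H_G -> J_XC *m S^T = gamma *m H_G -> S != 0 ->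
  (forall e' : 'rV[F2]_n, e' *m H_X^T = 0 -> e' *m J_XC^T != 0 -> (d <= wt e')%N) ->
  forall e, HXd dR dR H_X T H_G *m e^T = 0 -> JXMM dR J_XC S gamma *m e^T != 0 ->
  Num.min ((d%:R : rat) / opnorm S) dR%:R <= (wt e)%:R.
Proof.
move=> HdR Hc Hg HS Hmem e Hker HJ.
set u := un n nG rG dR dR e; set w := wn n nG rG dR dR e.
have HdR0 : (0 < dR)%N by apply: ltnW.
have Hch := @chain n rX nG rG dR dR H_X T H_G e Hker dR.-1 (leqnn _).
have HR : restr0 e *m J_XC^T + w 0 *m gamma^T != 0.
  apply: (@col_nz _ _ _ _ id _ HJ) => r; rewrite JXMM_e //.
  rewrite (mxF2_sw2 Hch) Hg trmx_mul mulmxDl !mulmxA.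
  by rewrite mxF2_cancel.
case: (boolP [exists k : 'I_dR, w k == 0]) => [/existsP [k /eqP Hk]|/existsPn Hall].
  have Hk' : (k <= dR.-1)%N by have := ltn_ord k; lia.
  have [HX Hw0] := @Xcore n rX nG rG dR dR H_X T H_G S e Hker Hc k Hk' Hk.
  have Hd := Hmem _ HX.
  rewrite ge_min; apply/orP; left.
  have Hp : 0 < opnorm S by apply: lt_le_trans (opnorm_ge1 _ _ _ HS).
  rewrite ler_pdivrMr // mulrC; apply: le_trans (@wt_sub_le n nG rG dR dR S e HS k Hk').
  rewrite ler_nat; apply: Hd.
  rewrite mulmxDl -mulmxA -(trmxK (S *m J_XC^T)) trmx_mul trmxK Hg trmx_mul mulmxA -Hw0.
  exact: HR.
rewrite ge_min; apply/orP; right; rewrite ler_nat.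
apply: wt_ge_dR => k; exact: Hall.
Qed.

Lemma distX_B n rX nG rG k dR (H_X : 'M[F2]_(rX, n)) T (H_G : 'M[F2]_(rG, nG)) S
  (JX' : 'M[F2]_(k, n)) (d : nat) :
  (2 <= dR)%N -> H_X *m S^T = T *m H_G -> S != 0 ->
  (forall e' : 'rV[F2]_n, e' *m H_X^T = 0 -> e' *m JX'^T != 0 -> (d <= wt e')%N) ->
  forall e, HXd dR dR.-1 H_X T H_G *m e^T = 0 -> JXMB rG dR JX' S *m e^T != 0 ->
  (d%:R : rat) / opnorm S <= (wt e)%:R.
Proof.
move=> HdR Hc HS Hmem e Hker HJ.
have Hw : wn n nG rG dR dR.-1 e dR.-1 = 0.
  apply/rowP => g; rewrite !mxE; case: insubP => // b; by rewrite ltnn.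
have [HX _] := @Xcore n rX nG rG dR dR.-1 H_X T H_G S e Hker Hc dR.-1 (leqnn _) Hw.
have Hp : 0 < opnorm S by apply: lt_le_trans (opnorm_ge1 _ _ _ HS).
rewrite ler_pdivrMr // mulrC; apply: le_trans (@wt_sub_le n nG rG dR dR.-1 S e HS _ (leqnn _)).
rewrite ler_nat; apply: Hmem => //.
apply: (@col_nz _ _ _ _ id _ HJ) => r; rewrite JXMB_e mulmxDl -mulmxA.
by rewrite trmx_mul trmxK.
Qed.

Lemma distZ n rZ nG rG dR nw k (H_Z : 'M[F2]_(rZ, n)) S (H_G : 'M[F2]_(rG, nG))
  (JZ' : 'M[F2]_(k, n)) (d : nat) :
  (forall e' : 'rV[F2]_n, e' *m H_Z^T = 0 -> e' *m JZ'^T != 0 -> (d <= wt e')%N) ->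
  forall e, HZd dR nw H_Z S H_G *m e^T = 0 -> JZd dR.-1 nG nw rG JZ' *m e^T != 0 ->
  (d <= wt e)%N.
Proof.
move=> Hmem e Hker HJ; rewrite -(wt_split n nG rG dR nw e) -addnA.
apply: leq_trans (leq_addr _ _); apply: Hmem; first exact: K0Z Hker.
apply: (@col_nz _ _ _ _ id _ HJ) => r; exact: JZd_e.
Qed.

Lemma J_nz n k p (K : 'M[F2]_(k, n)) (A : 'M[F2]_(k, p)) (J : 'M[F2]_(p, n)) (e' : 'rV[F2]_n) :
  K = A *m J -> e' *m K^T != 0 -> J *m e'^T != 0.
Proof.
move=> ->; apply: contra => /eqP H.
by rewrite trmx_mul mulmxA -[e' *m J^T]trmxK trmx_mul trmxK H trmx0 mul0mx.
Qed.

Lemma mem_bound m r k (H : 'M[F2]_(r, m)) (J : 'M[F2]_(k, m)) (e' : 'rV[F2]_m) :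
  e' *m H^T = 0 -> J *m e'^T != 0 -> (dist H J <= wt e')%N.
Proof.
move=> H1 H2; apply: bigminn_le; rewrite H2 andbT.
by rewrite -[H]trmxK -trmx_mul H1 trmx0.
Qed.

Lemma dist_le m r k (H : 'M[F2]_(r, m)) (J : 'M[F2]_(k, m)) : (dist H J <= m.+1)%N.
Proof.
apply: (@bigminn_ge _ _ _ _ (fun x => x <= m.+1)%N) => // e _; rewrite wtE.
apply: (@leq_trans (\sum_(j < m) 1)%N); last by rewrite sum_nat_const card_ord muln1.
by apply: leq_sum => j _; case: (_ != _).
Qed.

Lemma dist_lb m r k (H : 'M[F2]_(r, m)) (J : 'M[F2]_(k, m)) (B : rat) :
  B <= (m.+1)%:R -> (forall e, H *m e^T = 0 -> J *m e^T != 0 -> B <= (wt e)%:R) ->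
  B <= (dist H J)%:R.
Proof.
move=> Hm Hb; apply: (@bigminn_ge _ _ _ _ (fun x => B <= x%:R)) => // e /andP [/eqP H1 H2].
exact: Hb.
Qed.

Lemma min_lb (B : rat) a b : B <= a%:R -> B <= b%:R -> B <= (minn a b)%:R.
Proof. by rewrite /minn; case: ifP. Qed.

Lemma card_Coord n nu nG nw rG : (n <= #|Coord n nu nG nw rG|)%N.
Proof. rewrite /Coord !card_sum !card_ord -addnA; exact: leq_addr. Qed.

Lemma divS_le (d : nat) (S : rat) : 1 <= S -> (d%:R : rat) / S <= d%:R.
Proof.
move=> H1; have Hp : 0 < S by apply: lt_le_trans H1.
by rewrite ler_pdivrMr // ler_peMr.
Qed.

Theorem theorem2
  (n rX rZ q c kg nG rG dR : nat)
  (H_X : 'M[F2]_(rX, n)) (H_Z : 'M[F2]_(rZ, n))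
  (J_X J_Z : 'M[F2]_(q + c, n)) (F_X F_Z : 'M[F2]_(kg, n))
  (J_ZA : 'M[F2]_(q, n)) (J_ZC : 'M[F2]_(c, n)) (Jbar : 'M[F2]_(q + c))
  (H_G : 'M[F2]_(rG, nG)) (S : 'M[F2]_(nG, n)) (T : 'M[F2]_(rX, rG))
  (gamma : 'M[F2]_(c, rG)) :
  (* the memory: a CSS subsystem code *)
  (kermx H_X^T == H_Z + J_Z + F_Z)%MS ->
  \rank (H_Z + J_Z + F_Z)%MS = (\rank H_Z + \rank J_Z + \rank F_Z)%N ->
  (kermx H_Z^T == H_X + J_X + F_X)%MS ->
  \rank (H_X + J_X + F_X)%MS = (\rank H_X + \rank J_X + \rank F_X)%N ->
  J_X *m J_Z^T = 1%:M ->
  F_X *m F_Z^T = 1%:M ->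
  (* v_1..v_q (rows of J_ZA) extended by v_{q+1}..v_k (rows of J_ZC) to a
     basis of rs J_Z, and bar J_Z *)
  row_free (col_mx J_ZA J_ZC) ->
  (col_mx J_ZA J_ZC == J_Z)%MS ->
  Jbar \in unitmx ->
  col_mx J_ZA J_ZC = Jbar *m J_Z ->
  (* d_R >= 2, compatible glue code with S <> 0 *)
  (2 <= dR)%N ->
  H_X *m S^T = T *m H_G ->
  S != 0 ->
  let J_XA := usubmx (JXprime Jbar J_X) in
  let J_XC := dsubmx (JXprime Jbar J_X) in
  let d := code_dist H_X H_Z J_X J_Z in
  (* (A) measurement sticker, finely devised *)
  ((exists (m : nat) (U : 'M[F2]_(m, n)),
       (U <= H_Z + F_Z)%MS /\ (col_mx J_ZA U == kermx H_G^T *m S)%MS) ->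
   J_XC *m S^T = gamma *m H_G ->
   let HMMX := HXd dR dR H_X T H_G in
   let HMMZ := HZd dR dR H_Z S H_G in
   let JMMX := JXMM dR J_XC S gamma in
   let JMMZ := JZd dR.-1 nG dR rG J_ZC in
   ((forall v : 'rV[F2]_n,
          (v <= H_X)%MS <-> exists h, (h <= HMMX)%MS /\ restr0 h = v) /\
       (forall h : 'rV[F2]_n, (h <= H_Z)%MS -> (ext0 dR.-1 nG dR rG h <= HMMZ)%MS) /\
       (forall x : 'rV[F2]_n, (x <= J_X)%MS -> x *m J_ZA^T = 0 ->
          exists x', (x' <= JMMX)%MS /\ restr0 x' = x) /\
       (forall z : 'rV[F2]_n, (z <= J_Z)%MS ->
          (ext0 dR.-1 nG dR rG z <= JMMZ + HMMZ)%MS) /\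
       (forall z : 'rV[F2]_n, (z <= J_ZA)%MS -> (ext0 dR.-1 nG dR rG z <= HMMZ)%MS)
     /\ Num.min ((d%:R : rat) / opnorm S) (dR%:R) <=
         (code_dist HMMX HMMZ JMMX JMMZ)%:R)) /\
  (* (B) branch sticker, coarsely devised *)
  ((J_ZA <= kermx H_G^T *m S)%MS ->
   let HMBX := HXd dR dR.-1 H_X T H_G in
   let HMBZ := HZd dR dR.-1 H_Z S H_G in
   let JMBX := JXMB rG dR (col_mx J_XA J_XC) S in
   let JMBZ := JZd dR.-1 nG dR.-1 rG (col_mx J_ZA J_ZC) in
   ((forall v : 'rV[F2]_n,
          (v <= H_X)%MS <-> exists h, (h <= HMBX)%MS /\ restr0 h = v) /\
       (forall h : 'rV[F2]_n, (h <= H_Z)%MS -> (ext0 dR.-1 nG dR.-1 rG h <= HMBZ)%MS) /\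
       (forall x : 'rV[F2]_n, (x <= J_X)%MS ->
          exists x', (x' <= JMBX)%MS /\ restr0 x' = x) /\
       (forall z : 'rV[F2]_n, (z <= J_Z)%MS -> (ext0 dR.-1 nG dR.-1 rG z <= JMBZ)%MS) /\
       (forall z : 'rV[F2]_n, (z <= J_ZA)%MS ->
          exists g, (g <= HMBZ)%MS /\ open_supp dR (ext0 dR.-1 nG dR.-1 rG z + g))
     /\ (d%:R : rat) / opnorm S <= (code_dist HMBX HMBZ JMBX JMBZ)%:R)).
Proof.
move=> HkX HrkZ HkZ HrkX HJ HF Hfree HJeq Hu HZ HdR Hc HS J_XA J_XC d.
have HS1 := opnorm_ge1 _ _ _ HS.
have HdX : (d <= dist H_X J_X)%N by rewrite /d /code_dist geq_minl.
have HdZ : (d <= dist H_Z J_Z)%N by rewrite /d /code_dist geq_minr.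
have Hdn : (d <= n.+1)%N := leq_trans HdX (dist_le _ _ _ H_X J_X).
have HJXC : J_XC = dsubmx (invmx Jbar)^T *m J_X by rewrite /J_XC /JXprime mul_dsub_mx.
have HJZC : J_ZC = dsubmx Jbar *m J_Z by rewrite mul_dsub_mx -HZ col_mxKd.
have HJX' : col_mx J_XA J_XC = (invmx Jbar)^T *m J_X by rewrite /J_XA /J_XC vsubmxK.
split.
- move=> [m [U [HU Hfine]]] Hg HMMX HMMZ JMMX JMMZ.
  have HA : (J_ZA <= kermx H_G^T *m S)%MS.
    by move: Hfine => /andP [+ _]; rewrite col_mx_sub => /andP [].
  split; first exact: partI.
  split; first by move=> h; exact: partII.
  split.
    move=> x Hx Hx0; have [b Hb] := @partIII _ _ _ _ _ _ _ _ HJ Hu HZ _ Hx Hx0.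
    exists (vec_of (fun i => b 0 i) *m JMMX); split; first exact: submxMl.
    by rewrite restr0_JXMM row_vec Hb.
  split.
    move=> z Hz; have [b Hb] := @partIV _ _ _ _ _ _ _ Hu HZ _ Hz.
    rewrite Hb ext0D addrC; apply: addmx_sub_adds.
      apply/submxP; exists (vec_of (fun i => rsubmx b 0 i)); by rewrite JZd_ext row_vec.
    have [y [Hy ->]] := @getY _ _ _ _ _ _ _ _ (submxMl (lsubmx b) J_ZA) HA.
    exact: (@partV_M _ _ _ _ _ _ _ _ _ HdR Hy).
  split.
    move=> z Hz; have [y [Hy ->]] := @getY _ _ _ _ _ _ _ _ Hz HA.
    exact: (@partV_M _ _ _ _ _ _ _ _ _ HdR Hy).
  apply: min_lb.
    apply: dist_lb.
      rewrite ge_min; apply/orP; left.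
      apply: (@le_trans _ _ (d%:R)); first exact: divS_le.
      rewrite ler_nat (leq_trans Hdn) // ltnS.
      exact: card_Coord.
    move=> e He1 He2; apply: (@distX_M _ _ _ _ _ _ _ _ _ _ _ _ _ HdR Hc Hg HS _ e He1 He2) => e' H1 H2.
    exact: (leq_trans HdX (@mem_bound _ _ _ _ _ _ H1 (@J_nz _ _ _ _ _ _ _ HJXC H2))).
  apply: dist_lb.
    rewrite ge_min; apply/orP; left.
    apply: (@le_trans _ _ (d%:R)); first exact: divS_le.
    rewrite ler_nat (leq_trans Hdn) // ltnS; exact: card_Coord.
  move=> e He1 He2.
  have Hd := @distZ _ _ _ _ _ _ _ _ _ _ _ d (fun e' H1 H2 =>
     leq_trans HdZ (@mem_bound _ _ _ _ _ _ H1 (@J_nz _ _ _ _ _ _ _ HJZC H2))) e He1 He2.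
  rewrite ge_min; apply/orP; left.
  apply: (@le_trans _ _ (d%:R)); first exact: divS_le.
  by rewrite ler_nat.
- move=> HA HMBX HMBZ JMBX JMBZ.
  split; first exact: partI.
  split; first by move=> h; exact: partII.
  split.
    move=> x Hx; have [b Hb] := @partIIIB _ _ _ _ _ Hu _ Hx.
    exists (vec_of (fun i => b 0 i) *m JMBX); split; first exact: submxMl.
    by rewrite restr0_JXMB row_vec Hb /J_XA /J_XC vsubmxK.
  split.
    move=> z Hz; have [b Hb] := @partIVB _ _ _ _ _ _ _ Hu HZ _ Hz.
    apply/submxP; exists (vec_of (fun i => b 0 i)); by rewrite JZd_ext row_vec Hb.
  split.
    move=> z Hz; have [y [Hy ->]] := @getY _ _ _ _ _ _ _ _ Hz HA.
    exact: (@partV_B _ _ _ _ _ _ _ _ _ HdR Hy).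
  apply: min_lb.
    apply: dist_lb.
      apply: (@le_trans _ _ (d%:R)); first exact: divS_le.
      rewrite ler_nat (leq_trans Hdn) // ltnS; exact: card_Coord.
    move=> e He1 He2.
    apply: (@distX_B _ _ _ _ _ _ _ _ _ _ _ _ HdR Hc HS _ e He1 He2) => e' H1 H2.
    exact: (leq_trans HdX (@mem_bound _ _ _ _ _ _ H1 (@J_nz _ _ _ _ _ _ _ HJX' H2))).
  apply: dist_lb.
    apply: (@le_trans _ _ (d%:R)); first exact: divS_le.
    rewrite ler_nat (leq_trans Hdn) // ltnS; exact: card_Coord.
  move=> e He1 He2.
  have Hd := @distZ _ _ _ _ _ _ _ _ _ _ _ d (fun e' H1 H2 =>
     leq_trans HdZ (@mem_bound _ _ _ _ _ _ H1 (@J_nz _ _ _ _ _ _ _ HZ H2))) e He1 He2.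
  apply: (@le_trans _ _ (d%:R)); first exact: divS_le.
  by rewrite ler_nat.
Qed.
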